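(* Let $\gamma>0$, let $\Pi\subseteq\mathbb R^d$ be closed and convex with $0\in\Pi$, let $\theta:\mathbb R^d\to\mathbb R^d$, and define $F(v,z):=\frac12\gamma^2\,\mathrm{dist}^2\{\Pi,\frac{z+\theta(v)}{\gamma}\}-\frac12|z+\theta(v)|^2+\frac12|z|^2$, $G(v,z,\bar z):=\frac1\gamma(F(v,z+\gamma\bar z)-F(v,z))$, and $G^*(v,z,q):=\sup_{\bar z\in\mathbb R^d}(\bar z^{tr}q-G(v,z,\bar z))\in\mathbb R\cup\{\infty\}$. Then: (i) for all $v,z,\bar z\in\mathbb R^d$, $$-\gamma|\bar z|^2-\frac2\gamma(|z|^2+|\theta(v)|^2)\le G(v,z,\bar z)\le\gamma|\bar z|^2+\frac2\gamma(|z|^2+|\theta(v)|^2);$$ (ii) for every $(v,z)$, $q\mapsto G^*(v,z,q)$ is convex; (iii) for all $v,z,q\in\mathbb R^d$, $$G^*(v,z,q)\ge\max\Big\{0,\ \frac{|q|^2}{4\gamma}-\frac2\gamma(|z|^2+|\theta(v)|^2)\Big\}.$$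
   Context: $\mathrm{dist}\{\Pi,x\}$ denotes the Euclidean distance from $x\in\mathbb R^d$ to the set $\Pi$. *)

(* Defs.v *)
From HB Require Import structures.
From mathcomp Require Import all_boot all_order all_algebra.
From mathcomp Require Import all_classical all_reals all_analysis.
Set Implicit Arguments. Unset Strict Implicit. Unset Printing Implicit Defensive.
Import Order.TTheory GRing.Theory Num.Theory.
Import numFieldNormedType.Exports.
Local Open Scope classical_set_scope.
Local Open Scope ring_scope.

Section Defs.
Variables (R : realType) (d : nat).

Definition dotv (u v : 'rV[R]_d) : R := \sum_(i < d) u 0 i * v 0 i.

Definition enorm (u : 'rV[R]_d) : R := Num.sqrt (dotv u u).

Definition dist_set (Pi : set 'rV[R]_d) (x : 'rV[R]_d) : R :=
  inf [set enorm (x - y) | y in Pi].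

Definition convex_set_rV (Pi : set 'rV[R]_d) : Prop :=
  forall x y t, Pi x -> Pi y -> 0 <= t <= 1 -> Pi (t *: x + (1 - t) *: y).

Definition Ffun (gamma : R) (Pi : set 'rV[R]_d) (theta : 'rV[R]_d -> 'rV[R]_d)
  (v z : 'rV[R]_d) : R :=
  2^-1 * gamma ^+ 2 * (dist_set Pi (gamma^-1 *: (z + theta v))) ^+ 2
  - 2^-1 * enorm (z + theta v) ^+ 2 + 2^-1 * enorm z ^+ 2.

Definition Gfun gamma Pi theta (v z zb : 'rV[R]_d) : R :=
  gamma^-1 * (Ffun gamma Pi theta v (z + gamma *: zb) - Ffun gamma Pi theta v z).

Definition Gstar gamma Pi theta (v z q : 'rV[R]_d) : \bar R :=
  ereal_sup [set ((dotv zb q - Gfun gamma Pi theta v z zb)%:E) | zb in [set: 'rV[R]_d]].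

Definition convex_fun_ext (f : 'rV[R]_d -> \bar R) : Prop :=
  forall (q1 q2 : 'rV[R]_d) (t : R), 0 <= t <= 1 ->
    (f (t *: q1 + (1 - t) *: q2)%R <= t%:E * f q1 + (1 - t)%:E * f q2)%E.

End Defs.

(* Main.v *)
Require Import Defs.
From HB Require Import structures.
From mathcomp Require Import all_boot all_order all_algebra.
From mathcomp Require Import all_classical all_reals all_analysis.
From mathcomp Require Import ring lra.
Import Order.TTheory GRing.Theory Num.Theory.
Import numFieldNormedType.Exports.
Local Open Scope classical_set_scope.
Local Open Scope ring_scope.

Set Implicit Arguments. Unset Strict Implicit.
Section Help.
Variables (R : realType) (d : nat).
Implicit Types (u v w : 'rV[R]_d).

Lemma dotvDl u v w : dotv (u + v) w = dotv u w + dotv v w.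
Proof. by rewrite /dotv -big_split; apply: eq_bigr => i _; rewrite mxE mulrDl. Qed.
Lemma dotvC u v : dotv u v = dotv v u.
Proof. by rewrite /dotv; apply: eq_bigr => i _; rewrite mulrC. Qed.
Lemma dotvDr u v w : dotv w (u + v) = dotv w u + dotv w v.
Proof. by rewrite dotvC dotvDl !(dotvC w). Qed.
Lemma dotvZl (a : R) u v : dotv (a *: u) v = a * dotv u v.
Proof. by rewrite /dotv mulr_sumr; apply: eq_bigr => i _; rewrite mxE mulrA. Qed.
Lemma dotvZr (a : R) u v : dotv v (a *: u) = a * dotv v u.
Proof. by rewrite dotvC dotvZl dotvC. Qed.
Lemma dotvNl u v : dotv (- u) v = - dotv u v.
Proof. by rewrite -scaleN1r dotvZl mulN1r. Qed.
Lemma dotvNr u v : dotv v (- u) = - dotv v u.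
Proof. by rewrite dotvC dotvNl dotvC. Qed.
Lemma dotv0l v : dotv 0 v = 0.
Proof. by rewrite /dotv big1 // => i _; rewrite mxE mul0r. Qed.
Lemma dotv_ge0 u : 0 <= dotv u u.
Proof. by apply: sumr_ge0 => i _; rewrite -expr2 sqr_ge0. Qed.
Lemma enorm2 u : enorm u ^+ 2 = dotv u u.
Proof. by rewrite /enorm sqr_sqrtr // dotv_ge0. Qed.

Lemma dist_bounds (Pi : set 'rV[R]_d) x : Pi 0 ->
  0 <= dist_set Pi x /\ dist_set Pi x ^+ 2 <= dotv x x.
Proof.
move=> P0.
have ne : nonempty [set enorm (x - y) | y in Pi] by exists (enorm (x - 0)); exists 0.
have lb : lbound [set enorm (x - y) | y in Pi] 0.
  by move=> _ [y _ <-]; rewrite /enorm sqrtr_ge0.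
have h0 : 0 <= dist_set Pi x by apply: lb_le_inf.
split => //.
have h1 : dist_set Pi x <= enorm x.
  have := @ge_inf _ [set enorm (x - y) | y in Pi] (ex_intro _ 0 lb).
  by move=> /(_ (enorm (x - 0))); rewrite subr0; apply; exists 0; rewrite ?subr0.
rewrite -enorm2; apply: lerXn2r => //; rewrite /enorm ?sqrtr_ge0 //.
rewrite nnegrE //.
Qed.

End Help.

Lemma part1 (R : realType) (d : nat) (gamma : R) (Pi : set 'rV[R]_d)
  (theta : 'rV[R]_d -> 'rV[R]_d) :
  0 < gamma -> Pi 0 ->
  forall v z zb : 'rV[R]_d,
     - gamma * enorm zb ^+ 2 - 2 / gamma * (enorm z ^+ 2 + enorm (theta v) ^+ 2)
       <= Gfun gamma Pi theta v z zb /\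
     Gfun gamma Pi theta v z zb
       <= gamma * enorm zb ^+ 2 + 2 / gamma * (enorm z ^+ 2 + enorm (theta v) ^+ 2).
Proof.
move=> gp P0.
have gne : gamma != 0 by rewrite gt_eqF.
  move=> v z zb.
  set t := theta v.
  set d1 := dist_set Pi (gamma^-1 *: (z + gamma *: zb + t)).
  set d0 := dist_set Pi (gamma^-1 *: (z + t)).
  have [d1p d1b] := @dist_bounds R d Pi (gamma^-1 *: (z + gamma *: zb + t)) P0.
  have [d0p d0b] := @dist_bounds R d Pi (gamma^-1 *: (z + t)) P0.
  rewrite -/d1 in d1p d1b; rewrite -/d0 in d0p d0b.
  rewrite !(dotvZl, dotvZr) in d1b d0b.
  have e1 : gamma ^+ 2 * d1 ^+ 2 <= dotv (z + gamma *: zb + t) (z + gamma *: zb + t).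
    have := ler_wpM2l (sqr_ge0 gamma) d1b.
    by move/le_trans; apply; rewrite le_eqVlt; apply/orP; left; apply/eqP; field.
  have e0 : gamma ^+ 2 * d0 ^+ 2 <= dotv (z + t) (z + t).
    have := ler_wpM2l (sqr_ge0 gamma) d0b.
    by move/le_trans; apply; rewrite le_eqVlt; apply/orP; left; apply/eqP; field.
  have D1p : 0 <= gamma ^+ 2 * d1 ^+ 2 by rewrite mulr_ge0 // sqr_ge0.
  have D0p : 0 <= gamma ^+ 2 * d0 ^+ 2 by rewrite mulr_ge0 // sqr_ge0.
  rewrite /Gfun /Ffun -/t -/d1 -/d0 !enorm2.
  have f1 := dotv_ge0 (z - t).
  have f2 := dotv_ge0 (gamma *: zb - t).
  have f3 := dotv_ge0 (gamma *: zb - z).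
  move: e1 e0 f1 f2 f3.
  rewrite !(dotvDl, dotvDr, dotvZl, dotvZr, dotvNl, dotvNr) (dotvC t z) (dotvC t zb) (dotvC z zb).
  rewrite -/t.
  set D1 := gamma ^+ 2 * d1 ^+ 2; set D0 := gamma ^+ 2 * d0 ^+ 2.
  set a := dotv z z; set b := dotv t t; set c := dotv zb zb.
  set p := dotv z t; set r := dotv zb z; set s := dotv zb t.
  move=> e1 e0 f1 f2 f3.
  have D1q : 0 <= D1 by []. have D0q : 0 <= D0 by [].
  have ha : 0 <= a := dotv_ge0 z. have hb : 0 <= b := dotv_ge0 t. have hc : 0 <= c := dotv_ge0 zb.
  have hgc : 0 <= gamma * (gamma * c) by rewrite !mulr_ge0 // ltW.
  split; rewrite -subr_ge0.
    match goal with |- is_true (0 <= ?X) => have -> : X = gamma^-1 * (2^-1 * D1 - 2^-1 * D0 - gamma * s + gamma * (gamma * c) + 2 * a + 2 * b) by rewrite /D1 /D0; field end.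
    apply: mulr_ge0; first by rewrite invr_ge0 ltW.
    lra.
  match goal with |- is_true (0 <= ?X) => have -> : X = gamma^-1 * (gamma * (gamma * c) + 2 * a + 2 * b - 2^-1 * D1 + 2^-1 * D0 + gamma * s) by rewrite /D1 /D0; field end.
  apply: mulr_ge0; first by rewrite invr_ge0 ltW.
  lra.
Qed.


Theorem lemma10 (R : realType) (d : nat) (gamma : R) (Pi : set 'rV[R]_d)
  (theta : 'rV[R]_d -> 'rV[R]_d) :
  0 < gamma -> closed Pi -> convex_set_rV Pi -> Pi 0 ->
  (forall v z zb : 'rV[R]_d,
     - gamma * enorm zb ^+ 2 - 2 / gamma * (enorm z ^+ 2 + enorm (theta v) ^+ 2)
       <= Gfun gamma Pi theta v z zb /\
     Gfun gamma Pi theta v z zb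
       <= gamma * enorm zb ^+ 2 + 2 / gamma * (enorm z ^+ 2 + enorm (theta v) ^+ 2))
  /\ (forall v z : 'rV[R]_d, convex_fun_ext (Gstar gamma Pi theta v z))
  /\ (forall v z q : 'rV[R]_d,
       ((Num.max 0 (enorm q ^+ 2 / (4 * gamma)
                     - 2 / gamma * (enorm z ^+ 2 + enorm (theta v) ^+ 2)))%:E
        <= Gstar gamma Pi theta v z q)%E).
Proof.
move=> gp _ _ P0.
have gne : gamma != 0 by rewrite gt_eqF.
have P1 := part1 theta gp P0.
split => //; split.
  move=> v z q1 q2 t /andP [t0 t1].
  apply/ereal_supP => y [zb _ <-].
  have -> : dotv zb (t *: q1 + (1 - t) *: q2) - Gfun gamma Pi theta v z zb
      = t * (dotv zb q1 - Gfun gamma Pi theta v z zb)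
        + (1 - t) * (dotv zb q2 - Gfun gamma Pi theta v z zb).
    rewrite dotvDr !dotvZr; ring.
  rewrite EFinD !EFinM.
  apply: leeD; apply: lee_wpmul2l; rewrite ?lee_fin ?subr_ge0 //;
    by apply: ereal_sup_ubound; exists zb.
move=> v z q.
have h0 : (0%:E <= Gstar gamma Pi theta v z q)%E.
  apply: ereal_sup_ubound; exists 0 => //.
  by rewrite /Gfun scaler0 addr0 subrr mulr0 dotv0l subrr.
have h1 : ((enorm q ^+ 2 / (4 * gamma)
                     - 2 / gamma * (enorm z ^+ 2 + enorm (theta v) ^+ 2))%:E
      <= Gstar gamma Pi theta v z q)%E.
  have hs : ((dotv ((2 * gamma)^-1 *: q) q - Gfun gamma Pi theta v z ((2 * gamma)^-1 *: q))%:E <= Gstar gamma Pi theta v z q)%E.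
    by apply: ereal_sup_ubound; exists ((2 * gamma)^-1 *: q).
  apply: le_trans hs.
  rewrite lee_fin.
  have [_ hG] := P1 v z ((2 * gamma)^-1 *: q).
  rewrite !enorm2 dotvZl !dotvZr dotvZl in hG *.
  set K := 2 / gamma * _ in hG *.
  set G := Gfun _ _ _ _ _ _ in hG *.
  rewrite lerBrDr addrC -lerBrDr.
  apply: le_trans hG _; rewrite le_eqVlt; apply/orP; left; apply/eqP.
  by field.
by rewrite maxEle; case: ifP.
Qed.
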